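(* Let $N\ge1$, $G$ a positive integer, $D>0$, and let $h_1\le\cdots\le h_N$ be positive reals. (a) If $k\in\{1,\dots,N\}$ satisfies $(N-k)D\le h_k\le(N+1-k)D$, $x_k^*=h_k-(N-k)D$ and $S=(N-k)D+x_k^*$, then for every $n\in\{1,\dots,k-1\}$, $$\frac{2\sqrt{GS^3}}{k-n}\le\frac{D\sqrt{G}}{\frac{1}{\sqrt{S}}-\frac{1}{\sqrt{(N-n)D+x_k^*}}}.$$ (b) If $m\in\{1,\dots,N-1\}$ satisfies $h_m<(N-m)D<h_{m+1}$ and $T=(N-m)D$, then for every $n\in\{1,\dots,m\}$, $$\frac{2\sqrt{GT^3}}{m-n+1}\le\frac{D\sqrt{G}}{\frac{1}{\sqrt{T}}-\frac{1}{\sqrt{(N-n+1)D}}}.$$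
   Context: In the paper, $h_n=\sqrt[3]{\rho_n^2/(4GE_n^2)}$ for clients with valuations $\rho_n>0$ and computation cost coefficients $E_n>0$ sorted by $\rho_n/E_n$; the left-hand sides are denoted $B_n$ (resp. $B'_n$) and the right-hand sides $O_n$ (resp. $O'_n$). *)

(* Defs.v *)
From Stdlib Require Export Reals.

(* Main.v *)
Require Import Defs.
From Stdlib Require Import Reals Lra Psatz.
Open Scope R_scope.
Lemma key (G S j D : R) : 0 <= G -> 0 < S -> 0 < j -> 0 < D ->
  2 * sqrt (G * S ^ 3) / j <= D * sqrt G / (1 / sqrt S - 1 / sqrt (S + j * D)).
Proof.
  intros hG hS hj hD.
  set (s := sqrt S). set (u := sqrt (S + j*D)). set (g := sqrt G).
  assert (hs : 0 < s) by (apply sqrt_lt_R0; lra).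
  assert (hu : 0 < u) by (apply sqrt_lt_R0; nra).
  assert (hs2 : s * s = S) by (apply sqrt_sqrt; lra).
  assert (hu2 : u * u = S + j * D) by (apply sqrt_sqrt; nra).
  assert (hg : 0 <= g) by apply sqrt_pos.
  assert (hus : s < u) by nra.
  assert (E1 : sqrt (G * S ^ 3) = g * (S * s)).
  { rewrite sqrt_mult; [|lra|apply pow_le; lra].
    replace (S ^ 3) with ((S*S)*S) by ring.
    rewrite sqrt_mult; [|nra|lra]. rewrite sqrt_square; [|lra]. reflexivity. }
  rewrite E1.
  assert (ED : D = (u*u - s*s)/j) by (field_simplify_eq; lra).
  replace (D * g / (1 / s - 1 / u)) with (g * s * u * (u + s) / j).
  2:{ rewrite ED. field. repeat split; lra. }
  unfold Rdiv. apply Rmult_le_compat_r.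
  - left; apply Rinv_0_lt_compat; lra.
  - rewrite <- hs2. assert (0 <= g * s * (u*u + u*s - 2*s*s)) by
      (apply Rmult_le_pos; [nra|nra]). nra.
Qed.
Theorem lemma3 (N : nat) (G : nat) (D : R) (h : nat -> R)
  (hN : (1 <= N)%nat) (hG : (1 <= G)%nat) (hD : 0 < D)
  (hpos : forall i : nat, (1 <= i <= N)%nat -> 0 < h i)
  (hsort : forall i j : nat, (1 <= i)%nat -> (i <= j)%nat -> (j <= N)%nat -> h i <= h j) :
  (forall k : nat, (1 <= k <= N)%nat ->
     (INR N - INR k) * D <= h k <= (INR N + 1 - INR k) * D ->
     let xk := h k - (INR N - INR k) * D in
     let S := (INR N - INR k) * D + xk in
     forall n : nat, (1 <= n)%nat -> (n <= k - 1)%nat ->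
       2 * sqrt (INR G * S ^ 3) / (INR k - INR n)
       <= D * sqrt (INR G) /
          (1 / sqrt S - 1 / sqrt ((INR N - INR n) * D + xk)))
  /\
  (forall m : nat, (1 <= m)%nat -> (m <= N - 1)%nat ->
     h m < (INR N - INR m) * D < h (S m) ->
     let T := (INR N - INR m) * D in
     forall n : nat, (1 <= n <= m)%nat ->
       2 * sqrt (INR G * T ^ 3) / (INR m - INR n + 1)
       <= D * sqrt (INR G) /
          (1 / sqrt T - 1 / sqrt ((INR N - INR n + 1) * D))).

Proof.
  split.
  - intros k hk hb xk S0 n hn1 hn2.
    assert (hkn : INR n < INR k) by (apply lt_INR; lia).
    assert (hS : S0 = h k) by (unfold S0, xk; ring).
    assert (hhk : 0 < h k) by (apply hpos; lia).
    replace ((INR N - INR n) * D + xk) with (S0 + (INR k - INR n) * D)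
      by (unfold S0, xk; ring).
    apply key; try lra. apply pos_INR.
  - intros m hm1 hm2 hb T n hn.
    assert (hmN : INR m < INR N) by (apply lt_INR; lia).
    assert (hnm : INR n <= INR m) by (apply le_INR; lia).
    replace ((INR N - INR n + 1) * D) with (T + (INR m - INR n + 1) * D)
      by (unfold T; ring).
    apply key; try lra. apply pos_INR. unfold T; nra.
Qed.
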